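(* Let $n\ge1$, $\omega,\varphi\in\mathbb{R}^n$, $\mathbf{a}\in\mathbb{R}^{n\times n}$ with rows $a_1,\dots,a_n\in\mathbb{R}^n$ (entries $a_{ij}$), $b,c\in\mathbb{R}^n$, $d\in\mathbb{R}$, and let $$f(x)=\sum_{i=1}^n c_i\sin\Big(\sum_{j=1}^n a_{ij}\sin(\omega_jx+\varphi_j)+b_i\Big)+d.$$ For $\mathbf{k}\in\mathbb{Z}^n$, $u\in\mathbb{R}^n$ and $\beta\in\mathbb{R}$ put $\alpha_{\mathbf{k}}(u)=\prod_{j=1}^nJ_{k_j}(u_j)$, $A_{\mathbf{k}}(u,\beta)=\alpha_{\mathbf{k}}(u)\sin(\langle\mathbf{k},\varphi\rangle+\beta)$, $B_{\mathbf{k}}(u,\beta)=\alpha_{\mathbf{k}}(u)\cos(\langle\mathbf{k},\varphi\rangle+\beta)$, and let $A_{\mathbf{k}}=(A_{\mathbf{k}}(a_1,b_1),\dots,A_{\mathbf{k}}(a_n,b_n))$, $B_{\mathbf{k}}=(B_{\mathbf{k}}(a_1,b_1),\dots,B_{\mathbf{k}}(a_n,b_n))$. Then for all $x\in\mathbb{R}$, $$f(x)=\sum_{\mathbf{k}\in\mathbb{Z}^n}\langle c,A_{\mathbf{k}}\rangle\cos\big(\langle\mathbf{k},\omega\rangle x\big)+\langle c,B_{\mathbf{k}}\rangle\sin\big(\langle\mathbf{k},\omega\rangle x\big)+d.$$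
   Context: $J_k$ is the Bessel function of the first kind of integer order $k$; $\langle\cdot,\cdot\rangle$ is the standard inner product on $\mathbb{R}^n$ (so $\langle\mathbf{k},\omega\rangle=\sum_jk_j\omega_j$). The function $f$ is a sinusoidal network with one hidden layer of width $n$: first layer $x\mapsto\sin(\omega x+\varphi)$, hidden layer $y\mapsto\sin(\mathbf{a}y+b)$, linear output $z\mapsto\langle c,z\rangle+d$. *)

(* Defs.v *)
From HB Require Import structures.
From mathcomp Require Import all_boot all_order all_algebra finmap.
From mathcomp Require Import all_classical all_reals all_analysis.
Set Implicit Arguments. Unset Strict Implicit. Unset Printing Implicit Defensive.
Import Order.TTheory GRing.Theory Num.Theory.
Local Open Scope ring_scope.

Definition besselJnat {R : realType} (m : nat) (x : R) : R :=
  limn (fun N : nat => \sum_(0 <= j < N)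
    ((-1) ^+ j / ((j`!)%:R * ((j + m)`!)%:R) * (x / 2) ^+ (2 * j + m))).

(* Integer order: J_{-m} = (-1)^m J_m. *)
Definition besselJ {R : realType} (k : int) (x : R) : R :=
  match k with
  | Posz m => besselJnat m x
  | Negz m => (-1) ^+ m.+1 * besselJnat m.+1 x
  end.

(* Unconditional (net-of-finite-subsets) convergence of a sum indexed by an
   arbitrary choiceType I: the finite partial sums over A converge to l as A
   grows through the finite subsets of I ordered by inclusion. *)
Definition has_sum {I : choiceType} {R : realType} (u : I -> R) (l : R) : Prop :=
  forall e : R, 0 < e -> exists A0 : {fset I}, forall A : {fset I},
    (A0 `<=` A)%fset -> `| (\sum_(i <- A) u i) - l | < e.

Definition zvec (n : nat) := {ffun 'I_n -> int}.

Definition zdot {R : realType} (n : nat) (k : zvec n) (v : 'I_n -> R) : R :=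
  \sum_(j < n) (k j)%:~R * v j.

Definition alpha {R : realType} (n : nat) (k : zvec n) (u : 'I_n -> R) : R :=
  \prod_(j < n) besselJ (k j) (u j).

Definition sinnet {R : realType} (n : nat) (omega phi : 'I_n -> R)
  (a : 'M[R]_n) (b c : 'I_n -> R) (d : R) (x : R) : R :=
  \sum_(i < n) c i * sin (\sum_(j < n) a i j * sin (omega j * x + phi j) + b i) + d.

(* Main.v *)
Require Import Defs.
From HB Require Import structures.
From mathcomp Require Import all_boot all_order all_algebra finmap.
From mathcomp Require Import all_classical all_reals all_analysis.
From mathcomp Require Import complex.
From mathcomp Require Import ring lra.
Import Order.TTheory GRing.Theory Num.Theory.
Import numFieldNormedType.Exports.
Local Open Scope ring_scope.
From mathcomp Require Import zify.
Set Implicit Arguments. Unset Strict Implicit.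
Section RealSums.
Variable R : realType.

Definition abssum {I : choiceType} (u : I -> R) :=
  exists M : R, forall A : {fset I}, \sum_(i <- A) `|u i| <= M.

Lemma sum_fset_perm {I : choiceType} (A : {fset I}) (s : seq I) (F : I -> R) :
  A =i s -> uniq s -> \sum_(i <- A) F i = \sum_(i <- s) F i.
Proof.
move=> As us; apply: perm_big; apply: uniq_perm => //; exact: fset_uniq.
Qed.

Lemma sum_fset_le {I : choiceType} (A B : {fset I}) (F : I -> R) :
  (A `<=` B)%fset -> (forall x, x \in B -> 0 <= F x) ->
  \sum_(i <- A) F i <= \sum_(i <- B) F i.
Proof.
move=> AB F0; rewrite [X in _ <= X](@big_fsetID _ _ _ _ (mem A)) /=.
set C := (X in \sum_(i <- X) F i + _).
have -> : \sum_(i <- C) F i = \sum_(i <- A) F i.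
  apply: eq_fbigl => x; rewrite !inE /=; apply/andP/idP => [[]//|xA]; split=> //.
  exact: (fsubsetP AB).
rewrite lerDl big_seq sumr_ge0 // => x; rewrite !inE /= => /andP[+ _]; exact: F0.
Qed.

Lemma has_sum_unique {I : choiceType} (u : I -> R) l1 l2 :
  has_sum u l1 -> has_sum u l2 -> l1 = l2.
Proof.
move=> h1 h2; case: (eqVneq l1 l2) => // ne.
have e0 : 0 < `|l1 - l2| / 2 by rewrite divr_gt0 // normr_gt0 subr_eq0.
have [A1 H1] := h1 _ e0; have [A2 H2] := h2 _ e0.
have := H1 (A1 `|` A2)%fset (fsubsetUl _ _); have := H2 (A1 `|` A2)%fset (fsubsetUr _ _).
set S := \sum_(i <- _) _ => a b.
have := ler_normB (S - l2) (S - l1).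
have -> : S - l2 - (S - l1) = l1 - l2 by ring.
lra.
Qed.

Lemma has_sum_ext {I : choiceType} (u v : I -> R) l :
  (forall i, u i = v i) -> has_sum u l -> has_sum v l.
Proof. by move=> uv; rewrite (boolp.funext uv). Qed.

Lemma has_sum0 {I : choiceType} : has_sum (fun _ : I => 0 : R) 0.
Proof. by move=> e e0; exists fset0 => A _; rewrite big1 // subrr normr0. Qed.

Lemma has_sumD {I : choiceType} (u v : I -> R) l m :
  has_sum u l -> has_sum v m -> has_sum (fun i => u i + v i) (l + m).
Proof.
move=> hu hv e e0; have e2 : 0 < e/2 by rewrite divr_gt0.
have [A1 H1] := hu _ e2; have [A2 H2] := hv _ e2.
exists (A1 `|` A2)%fset => A sA.
have := H1 A (fsubset_trans (fsubsetUl _ _) sA).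
have := H2 A (fsubset_trans (fsubsetUr _ _) sA).
rewrite big_split /=.
set a := \sum_(i <- A) u i; set b := \sum_(i <- A) v i => hb ha.
have := ler_normD (a - l) (b - m).
have -> : a - l + (b - m) = a + b - (l + m) by ring.
lra.
Qed.

Lemma has_sumZ {I : choiceType} (u : I -> R) l c :
  has_sum u l -> has_sum (fun i => c * u i) (c * l).
Proof.
move=> hu e e0; have e2 : 0 < e / (`|c| + 1) by rewrite divr_gt0 // ltr_wpDl.
have [A1 H1] := hu _ e2; exists A1 => A sA.
rewrite -mulr_sumr -mulrBr normrM.
have := H1 A sA; set x := `|_ - _| => hx.
have cx : `|c| * x <= `|c| * (e / (`|c| + 1)) by rewrite ler_wpM2l // ltW.
have : (`|c| + 1) * (e / (`|c| + 1)) = e by rewrite mulrC divfK // gt_eqF // ltr_wpDl.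
have := normr_ge0 c; have := normr_ge0 (_ - _ : R).
nra.
Qed.

Lemma has_sumN {I : choiceType} (u : I -> R) l :
  has_sum u l -> has_sum (fun i => - u i) (- l).
Proof.
move=> /(@has_sumZ _ _ _ (-1)); rewrite mulN1r; apply: has_sum_ext => i; by rewrite mulN1r.
Qed.

Lemma has_sumB {I : choiceType} (u v : I -> R) l m :
  has_sum u l -> has_sum v m -> has_sum (fun i => u i - v i) (l - m).
Proof. by move=> hu /has_sumN; apply: has_sumD. Qed.

Lemma has_sum_big {I X : choiceType} (s : seq X) (u : X -> I -> R) (l : X -> R) :
  (forall x, has_sum (u x) (l x)) ->
  has_sum (fun i => \sum_(x <- s) u x i) (\sum_(x <- s) l x).
Proof.
move=> h; elim: s => [|x s IH].
  by rewrite big_nil; apply: has_sum_ext has_sum0 => i; rewrite big_nil.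
rewrite big_cons; apply: has_sum_ext (has_sumD (h x) IH) => i.
by rewrite big_cons.
Qed.

End RealSums.

Section RealSums2.
Variable R : realType.

Lemma abssum_le {I : choiceType} (u v : I -> R) :
  (forall i, `|v i| <= `|u i|) -> abssum u -> abssum v.
Proof.
move=> uv [M HM]; exists M => A; apply: le_trans (HM A).
by apply: ler_sum => i _.
Qed.

Lemma abssum_ge0 {I : choiceType} (u : I -> R) M :
  (forall A : {fset I}, \sum_(i <- A) `|u i| <= M) -> 0 <= M.
Proof. by move=> /(_ fset0); rewrite big_seq_fset0. Qed.

Lemma abssumD {I : choiceType} (u v : I -> R) :
  abssum u -> abssum v -> abssum (fun i => u i + v i).
Proof.
move=> [M HM] [N HN]; exists (M + N) => A.
apply: le_trans (lerD (HM A) (HN A)); rewrite -big_split /=.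
by apply: ler_sum => i _; apply: ler_normD.
Qed.

Lemma abssumZ {I : choiceType} (u : I -> R) c :
  abssum u -> abssum (fun i => c * u i).
Proof.
move=> [M HM]; exists (`|c| * M) => A.
under eq_bigr do rewrite normrM.
by rewrite -mulr_sumr ler_wpM2l.
Qed.

Lemma abssumN {I : choiceType} (u : I -> R) : abssum u -> abssum (fun i => - u i).
Proof. by apply: abssum_le => i; rewrite normrN. Qed.

Lemma abssumB {I : choiceType} (u v : I -> R) :
  abssum u -> abssum v -> abssum (fun i => u i - v i).
Proof. by move=> hu /abssumN; apply: abssumD. Qed.

Lemma abssum_norm {I : choiceType} (u : I -> R) : abssum u -> abssum (fun i => `|u i|).
Proof. by apply: abssum_le => i; rewrite normr_id. Qed.

Lemma has_sum_pos {I : choiceType} (u : I -> R) M :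
  (forall i, 0 <= u i) -> (forall A : {fset I}, \sum_(i <- A) u i <= M) ->
  exists l, has_sum u l.
Proof.
move=> u0 HM.
pose E : set R := fun x => exists A : {fset I}, x = \sum_(i <- A) u i.
have hE : has_sup E.
  split; first by exists (\sum_(i <- fset0) u i); exists fset0.
  by exists M => x [A ->].
exists (sup E) => e e0.
have [x [A0 ->] hx] := sup_adherent e0 hE.
exists A0 => A sA.
have h1 : \sum_(i <- A0) u i <= \sum_(i <- A) u i by apply: sum_fset_le.
have h2 : \sum_(i <- A) u i <= sup E by apply: sup_upper_bound => //; exists A.
rewrite ler0_norm ?subr_le0 //; lra.
Qed.

Lemma abssum_has_sum {I : choiceType} (u : I -> R) : abssum u -> exists l, has_sum u l.
Proof.
move=> [M HM].
have [lp hp] : exists l, has_sum (fun i => (`|u i| + u i) / 2) l.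
  apply: (@has_sum_pos _ _ M) => [i|A].
    have h1 := ler_norm (u i); have h2 : - u i <= `|u i| by rewrite -normrN ler_norm.
    lra.
  apply: le_trans (HM A); apply: ler_sum => i _.
  have h1 := ler_norm (u i); have h2 : - u i <= `|u i| by rewrite -normrN ler_norm.
  have h3 : 0 <= (`|u i| + u i) / 2 by lra.
  lra.
have [ln hn] : exists l, has_sum (fun i => (`|u i| - u i) / 2) l.
  apply: (@has_sum_pos _ _ M) => [i|A].
    have h1 := ler_norm (u i); have h2 : - u i <= `|u i| by rewrite -normrN ler_norm.
    lra.
  apply: le_trans (HM A); apply: ler_sum => i _.
  have h1 := ler_norm (u i); have h2 : - u i <= `|u i| by rewrite -normrN ler_norm.
  have h3 : 0 <= (`|u i| - u i) / 2 by lra.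
  lra.
exists (lp - ln); apply: has_sum_ext (has_sumB hp hn) => i; lra.
Qed.

Lemma has_sum_finite {I : choiceType} (u : I -> R) (A : {fset I}) :
  (forall i, i \notin A -> u i = 0) -> has_sum u (\sum_(i <- A) u i).
Proof.
move=> hA e e0; exists A => B sB.
rewrite -(big_fset_incl _ sB) ?subrr ?normr0 // => x _; exact: hA.
Qed.

Lemma abssum_finite {I : choiceType} (u : I -> R) (A : {fset I}) :
  (forall i, i \notin A -> u i = 0) -> abssum u.
Proof.
move=> hA; exists (\sum_(i <- A) `|u i|) => B.
rewrite (@big_fsetID _ _ _ _ (mem A)) /=.
rewrite [X in _ + X]big1_fset ?addr0; last first.
  by move=> i; rewrite !inE /= => /andP[_ /hA ->] _; rewrite normr0.
apply: sum_fset_le => [|x _]; last exact: normr_ge0.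
by apply/fsubsetP => x; rewrite !inE => /andP[].
Qed.


End RealSums2.

Section RealSums3.
Variable R : realType.

Lemma seq_preim {I J : choiceType} (h : J -> I) (s : seq I) :
  injective h -> exists B : {fset J}, forall j, (j \in B) = (h j \in s).
Proof.
move=> hinj; elim: s => [|x s [B HB]].
  by exists fset0 => j; rewrite inE in_nil.
case: (boolp.pselect (exists j0, h j0 = x)) => [[j0 hj0]|nx].
  exists (j0 |` B)%fset => j; rewrite !inE HB; congr (_ || _).
  apply/eqP/eqP => [->//|hx]; apply: hinj; by rewrite hx hj0.
exists B => j; rewrite inE HB; case: eqP => //= hx.
by case: nx; exists j.
Qed.

Lemma fset_preim {I J : choiceType} (h : J -> I) (A : {fset I}) :
  injective h -> exists B : {fset J}, forall j, (j \in B) = (h j \in A).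
Proof. by move=> hinj; have [B HB] := seq_preim (A : seq I) hinj; exists B. Qed.

Definition fimg {I J : choiceType} (h : J -> I) (B : {fset J}) : {fset I} :=
  seq_fset tt (map h B).

Lemma fimgE {I J : choiceType} (h : J -> I) (B : {fset J}) i :
  (i \in fimg h B) = (i \in map h B).
Proof. by rewrite /fimg seq_fsetE. Qed.

Lemma sum_fimg {I J : choiceType} (h : J -> I) (B : {fset J}) (F : I -> R) :
  injective h -> \sum_(i <- fimg h B) F i = \sum_(j <- B) F (h j).
Proof.
move=> hinj; rewrite (@sum_fset_perm _ _ _ (map h B)) ?big_map //.
  by move=> i; rewrite fimgE.
by rewrite map_inj_uniq // fset_uniq.
Qed.

Lemma has_sum_reindex {I J : choiceType} (h : J -> I) (u : I -> R) l :
  injective h -> (forall i, (forall j, h j <> i) -> u i = 0) ->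
  has_sum u l <-> has_sum (fun j => u (h j)) l.
Proof.
move=> hinj hz; split.
  move=> hu e e0; have [A0 H0] := hu e e0.
  have [B0 HB0] := fset_preim A0 hinj.
  exists B0 => B sB.
  have := H0 (A0 `|` fimg h B)%fset (fsubsetUl _ _).
  rewrite -(@big_fset_incl _ _ _ _ (fimg h B)) ?sum_fimg //; first exact: fsubsetUr.
  move=> x; rewrite !inE => /orP[xA|->//] xn; apply: hz => j hj.
  move: xn; rewrite fimgE -hj map_f //; apply: (fsubsetP sB); by rewrite HB0 hj.
move=> hv e e0; have [B0 H0] := hv e e0.
exists (fimg h B0) => A sA.
have [B HB] := fset_preim A hinj.
have sB : (B0 `<=` B)%fset.
  apply/fsubsetP => j jB0; rewrite HB; apply: (fsubsetP sA); rewrite fimgE map_f //.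
have := H0 B sB; rewrite -sum_fimg // (@big_fset_incl _ _ _ _ (fimg h B) A) //.
  by apply/fsubsetP => i; rewrite fimgE => /mapP[j + ->]; rewrite HB.
move=> x xA xn; apply: hz => j hj; move: xn; rewrite fimgE -hj map_f //.
by rewrite HB hj.
Qed.

Lemma abssum_reindex {I J : choiceType} (h : J -> I) (u : I -> R) :
  injective h -> abssum u -> abssum (fun j => u (h j)).
Proof.
move=> hinj [M HM]; exists M => B.
by have := HM (fimg h B); rewrite sum_fimg.
Qed.

Lemma has_sum_cvg (u : nat -> R) l :
  has_sum u l -> ((fun N => \sum_(0 <= k < N) u k) @ \oo --> l)%classic.
Proof.
move=> hu; apply/cvgrPdist_lt => e e0; have [A0 H0] := hu e e0.
exists (\max_(k <- A0) k).+1 => // N /= hN.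
have sA : (A0 `<=` seq_fset tt (iota 0 N))%fset.
  apply/fsubsetP => k kA; rewrite seq_fsetE mem_iota add0n /=.
  apply: leq_trans hN; rewrite ltnS; exact: (leq_bigmax_seq (F := id)).
have := H0 _ sA; rewrite (@sum_fset_perm _ _ _ (iota 0 N)) ?iota_uniq //; last first.
  by move=> k; rewrite seq_fsetE.
by rewrite distrC /index_iota subn0.
Qed.

Lemma has_sum_limn (u : nat -> R) l :
  has_sum u l -> limn (fun N => \sum_(0 <= k < N) u k) = l.
Proof. by move=> /has_sum_cvg; apply: cvg_lim. Qed.

End RealSums3.

Section RealSums4.
Variable R : realType.

Lemma sum_fsetD {I : choiceType} (A B : {fset I}) (F : I -> R) :
  (A `<=` B)%fset -> \sum_(i <- B) F i = \sum_(i <- A) F i + \sum_(i <- (B `\` A)%fset) F i.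
Proof.
move=> AB; rewrite (@big_fsetID _ _ _ _ (mem A)) /=; congr (_ + _); apply: eq_fbigl => x;
  rewrite !inE /=.
  by apply/andP/idP => [[]//|xA]; split => //; exact: (fsubsetP AB).
by rewrite andbC.
Qed.

Definition fprod {I J : choiceType} (A1 : {fset I}) (A2 : {fset J}) : {fset I * J} :=
  seq_fset tt [seq (i, j) | i <- A1, j <- A2].

Lemma fprodE {I J : choiceType} (A1 : {fset I}) (A2 : {fset J}) p :
  (p \in fprod A1 A2) = (p.1 \in A1) && (p.2 \in A2).
Proof.
rewrite seq_fsetE; apply/allpairsP/andP => [[[i j] /= [hi hj ->]]//|[h1 h2]].
by exists (p.1, p.2); case: p h1 h2.
Qed.

Lemma sum_fprod {I J : choiceType} (A1 : {fset I}) (A2 : {fset J}) (F : I * J -> R) :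
  \sum_(p <- fprod A1 A2) F p = \sum_(i <- A1) \sum_(j <- A2) F (i, j).
Proof.
rewrite (@sum_fset_perm _ _ _ [seq (i, j) | i <- A1, j <- A2]); last first.
- by apply: allpairs_uniq; rewrite ?fset_uniq // => -[? ?] [? ?] _ _ [-> ->].
- by move=> p; rewrite seq_fsetE.
by rewrite big_allpairs.
Qed.

Lemma sum_fprod_mul {I J : choiceType} (A1 : {fset I}) (A2 : {fset J}) (f : I -> R) (g : J -> R) :
  \sum_(p <- fprod A1 A2) f p.1 * g p.2 = (\sum_(i <- A1) f i) * (\sum_(j <- A2) g j).
Proof.
rewrite sum_fprod big_distrl /=; apply: eq_bigr => i _; by rewrite big_distrr.
Qed.

Lemma fprod_proj {I J : choiceType} (A : {fset I * J}) :
  (A `<=` fprod (fimg fst A) (fimg snd A))%fset.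
Proof. by apply/fsubsetP => p pA; rewrite fprodE !fimgE !map_f. Qed.

Lemma abssum_prod {I J : choiceType} (u : I -> R) (v : J -> R) :
  abssum u -> abssum v -> abssum (fun p : I * J => u p.1 * v p.2).
Proof.
move=> [M HM] [N HN]; exists (M * N) => A.
have M0 := abssum_ge0 HM; have N0 := abssum_ge0 HN.
apply: le_trans (_ : \sum_(p <- fprod (fimg fst A) (fimg snd A)) `|u p.1 * v p.2| <= _).
  apply: sum_fset_le => [|p _]; [exact: fprod_proj | exact: normr_ge0].
under eq_bigr do rewrite normrM.
rewrite (sum_fprod_mul _ _ (fun i => `|u i|) (fun j => `|v j|)); apply: ler_pM => //; apply: sumr_ge0 => *; exact: normr_ge0.
Qed.

Lemma has_sum_prod {I J : choiceType} (u : I -> R) (v : J -> R) U V :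
  has_sum u U -> abssum u -> has_sum v V -> abssum v ->
  has_sum (fun p : I * J => u p.1 * v p.2) (U * V).
Proof.
move=> hu au hv av.
have [TU hTU] := abssum_has_sum (abssum_norm au).
have [TV hTV] := abssum_has_sum (abssum_norm av).
have [M HM] := au; have [N HN] := av.
have M0 := abssum_ge0 HM; have N0 := abssum_ge0 HN.
move=> e e0.
pose K := 3 * N + 2 * M + `|U| + 1.
have K0 : 0 < K by rewrite /K; have := normr_ge0 U; lra.
pose d := e / K.
have d0 : 0 < d by rewrite divr_gt0.
have dK : d * K = e by rewrite /d divfK // gt_eqF.
have [P1 H1] := hu d d0; have [P1' H1'] := hTU d d0.
have [P2 H2] := hv d d0; have [P2' H2'] := hTV d d0.
pose Pu := (P1 `|` P1')%fset; pose Pv := (P2 `|` P2')%fset.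
have Hu : forall A, (Pu `<=` A)%fset -> `|\sum_(i <- A) u i - U| < d /\
    `|\sum_(i <- A) `|u i| - TU| < d.
  move=> A sA; split; [apply: H1 | apply: H1'];
    apply: fsubset_trans sA; [exact: fsubsetUl | exact: fsubsetUr].
have Hv : forall A, (Pv `<=` A)%fset -> `|\sum_(i <- A) v i - V| < d /\
    `|\sum_(i <- A) `|v i| - TV| < d.
  move=> A sA; split; [apply: H2 | apply: H2'];
    apply: fsubset_trans sA; [exact: fsubsetUl | exact: fsubsetUr].
exists (fprod Pu Pv) => A sA.
pose A1 := (Pu `|` fimg fst A)%fset; pose A2 := (Pv `|` fimg snd A)%fset.
have sA12 : (A `<=` fprod A1 A2)%fset.
  apply: fsubset_trans (fprod_proj A) _; apply/fsubsetP => p.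
  by rewrite !fprodE !inE => /andP[-> ->]; rewrite !orbT.
have s012 : (fprod Pu Pv `<=` fprod A1 A2)%fset by apply: fsubset_trans sA12.
pose x := \sum_(i <- Pu) u i; pose y := \sum_(j <- Pv) v j.
pose a := \sum_(i <- Pu) `|u i|; pose b := \sum_(j <- Pv) `|v j|.
pose a' := \sum_(i <- A1) `|u i|; pose b' := \sum_(j <- A2) `|v j|.
rewrite (sum_fsetD _ sA) (sum_fprod_mul _ _ u v) -/x -/y.
set D := \sum_(p <- _) _.
have [hx hx'] : `|x - U| < d /\ `|a - TU| < d by apply: Hu.
have [hy hy'] : `|y - V| < d /\ `|b - TV| < d by apply: Hv.
have [_ ha'] : `|\sum_(i <- A1) u i - U| < d /\ `|a' - TU| < d by apply: Hu; exact: fsubsetUl.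
have [_ hb'] : `|\sum_(i <- A2) v i - V| < d /\ `|b' - TV| < d by apply: Hv; exact: fsubsetUl.
have hyb : `|y| <= N by apply: le_trans (HN Pv); apply: ler_norm_sum.
have hb'N : b' <= N by exact: HN.
have haM : a <= M by exact: HM.
have a0 : 0 <= a by apply: sumr_ge0 => *; exact: normr_ge0.
have b'0 : 0 <= b' by apply: sumr_ge0 => *; exact: normr_ge0.
have hDab : `|D| <= a' * b' - a * b.
  apply: le_trans (ler_norm_sum _ _ _) _.
  under eq_bigr do rewrite normrM.
  have E := sum_fsetD (fun p : I * J => `|u p.1| * `|v p.2|) s012.
  rewrite /= !(sum_fprod_mul _ _ (fun i => `|u i|) (fun j => `|v j|)) -/a -/b -/a' -/b' in E.
  rewrite E [a * b + _]addrC addrK; apply: sum_fset_le => [|p _]; last by rewrite mulr_ge0.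
  exact: fsetSD.
have hxy : `|x * y - U * V| <= d * `|y| + `|U| * d.
  have -> : x * y - U * V = (x - U) * y + U * (y - V) by ring.
  apply: le_trans (ler_normD _ _) _; rewrite !normrM.
  by apply: lerD; apply: ler_pM; rewrite ?normr_ge0 // ltW.
have aa' : a <= a' by apply: sum_fset_le => [|? _]; [exact: fsubsetUl | exact: normr_ge0].
have bb' : b <= b' by apply: sum_fset_le => [|? _]; [exact: fsubsetUl | exact: normr_ge0].
clearbody x y a b a' b' D.
have haa : a' - a <= 2 * d.
  have := ler_norm (a' - TU); have := ler_norm (TU - a); rewrite distrC; lra.
have hbb : b' - b <= 2 * d.
  have := ler_norm (b' - TV); have := ler_norm (TV - b); rewrite distrC; lra.
have h1 : a' * b' - a * b <= 2 * d * N + M * (2 * d).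
  have -> : a' * b' - a * b = (a' - a) * b' + a * (b' - b) by ring.
  apply: lerD; first by apply: ler_pM => //; lra.
  by apply: ler_pM => //; lra.
have h2 : d * `|y| <= d * N by rewrite ler_wpM2l // ltW.
have := ler_normD D (x * y - U * V).
have -> : D + (x * y - U * V) = x * y + D - U * V by ring.
rewrite -dK /K; have := normr_ge0 U; nra.
Qed.

End RealSums4.

Section RealSums5.
Variable R : realType.

Lemma fset_common {K I : choiceType} (Q : K -> {fset I} -> Prop) (B : seq K) :
  (forall k, exists F0 : {fset I}, forall F, (F0 `<=` F)%fset -> Q k F) ->
  exists F0 : {fset I}, forall F, (F0 `<=` F)%fset -> forall k, k \in B -> Q k F.
Proof.
move=> h; elim: B => [|k B [F0 H0]]; first by exists fset0.
have [F1 H1] := h k; exists (F0 `|` F1)%fset => F sF k'; rewrite inE => /orP[/eqP ->|kB].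
  by apply: H1; apply: fsubset_trans sF; exact: fsubsetUr.
by apply: H0 => //; apply: fsubset_trans sF; exact: fsubsetUl.
Qed.

Definition fib {I K : choiceType} (g : I -> K) (u : I -> R) (k : K) :=
  fun i => if g i == k then u i else 0.

Lemma sum_eq_seq {K : eqType} (s : seq K) (y : K) (x : R) :
  uniq s -> \sum_(k <- s) (if y == k then x else 0) = if y \in s then x else 0.
Proof.
elim: s => [|k s IH]; first by rewrite big_nil.
rewrite big_cons inE /= => /andP[ks us]; rewrite IH //.
have [->|ne] := eqVneq y k; first by rewrite /= (negbTE ks) addr0.
by rewrite /= add0r.
Qed.

Lemma sum_const_fset {I : choiceType} (B : {fset I}) (c : R) :
  \sum_(k <- B) c = c * (#|`B|)%:R.
Proof.
by rewrite card_fset_sum1 natr_sum mulr_sumr; apply: eq_bigr => *; rewrite mulr1.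
Qed.

Lemma sum_fib {I K : choiceType} (g : I -> K) (u : I -> R) (B : {fset K}) (F : {fset I}) :
  \sum_(k <- B) \sum_(i <- F) fib g u k i =
  \sum_(i <- seq_fset tt [seq i <- F | g i \in B]) u i.
Proof.
rewrite exchange_big /=.
rewrite (@sum_fset_perm _ _ (seq_fset tt [seq i <- F | g i \in B]) [seq i <- F | g i \in B]); last first.
- by rewrite filter_uniq // fset_uniq.
- by move=> i; rewrite seq_fsetE.
rewrite big_filter [RHS]big_mkcond /=; apply: eq_bigr => i _.
by rewrite /fib sum_eq_seq // fset_uniq.
Qed.

Lemma has_sum_regroup {I K : choiceType} (u : I -> R) (g : I -> K) (s : K -> R) L :
  has_sum u L -> (forall k, has_sum (fib g u k) (s k)) -> has_sum s L.
Proof.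
move=> hu hs e e0.
have e2 : 0 < e / 2 by rewrite divr_gt0.
have [P HP] := hu _ e2.
exists (fimg g P) => B sB.
pose n : R := (#|`B|)%:R.
have n0 : 0 <= n by rewrite /n ler0n.
pose d := e / 2 / (n + 1).
have d0 : 0 < d by rewrite divr_gt0 // ltr_wpDl.
have dn : d * n + d = e / 2 by rewrite /d -[X in _ + X]mulr1 -mulrDr divfK // gt_eqF // ltr_wpDl.
have [F0 HF0] := fset_common (Q := fun k F => `|\sum_(i <- F) fib g u k i - s k| < d)
   (B : seq K) (fun k => hs k d d0).
pose F := (F0 `|` P)%fset.
have HF : forall k, k \in B -> `|\sum_(i <- F) fib g u k i - s k| < d.
  by apply: HF0; exact: fsubsetUl.
have hF' : `|\sum_(k <- B) \sum_(i <- F) fib g u k i - L| < e / 2.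
  rewrite sum_fib; apply: HP; apply/fsubsetP => i iP.
  rewrite seq_fsetE mem_filter; apply/andP; split.
    apply: (fsubsetP sB); by rewrite fimgE map_f.
  by rewrite inE iP orbT.
have hD : `|\sum_(k <- B) (\sum_(i <- F) fib g u k i - s k)| <= d * n.
  apply: le_trans (ler_norm_sum _ _ _) _.
  rewrite -sum_const_fset big_seq [X in _ <= X]big_seq; apply: ler_sum => k kB.
  exact/ltW/HF.
move: hD hF'; rewrite sumrB.
set X := \sum_(k <- B) _; set Y := \sum_(k <- B) s k => hD hF'.
have := ler_normB (X - L) (X - Y).
have -> : X - L - (X - Y) = Y - L by ring.
lra.
Qed.

Lemma abssum_regroup {I K : choiceType} (u : I -> R) (g : I -> K) (s : K -> R) :
  abssum u -> (forall k, has_sum (fib g u k) (s k)) -> abssum s.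
Proof.
move=> [M HM] hs; exists (M + 1) => B.
pose n : R := (#|`B|)%:R.
have n0 : 0 <= n by rewrite /n ler0n.
pose d := 1 / (n + 1).
have d0 : 0 < d by rewrite divr_gt0 // ltr_wpDl.
have dn : d * n + d = 1 by rewrite /d -[X in _ + X]mulr1 -mulrDr divfK // gt_eqF // ltr_wpDl.
have [F HF] := fset_common (Q := fun k F => `|\sum_(i <- F) fib g u k i - s k| < d)
   (B : seq K) (fun k => hs k d d0).
have {}HF := HF F (fsubset_refl _).
have h1 : \sum_(k <- B) `|s k| <= \sum_(k <- B) (`|\sum_(i <- F) fib g u k i| + d).
  rewrite big_seq [X in _ <= X]big_seq; apply: ler_sum => k kB.
  have := HF k kB; have := ler_normB (\sum_(i <- F) fib g u k i) (\sum_(i <- F) fib g u k i - s k).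
  have -> : \sum_(i <- F) fib g u k i - (\sum_(i <- F) fib g u k i - s k) = s k by ring.
  lra.
have h2 : \sum_(k <- B) `|\sum_(i <- F) fib g u k i| <= M.
  apply: le_trans (HM (seq_fset tt [seq i <- F | g i \in B])).
  rewrite -sum_fib; apply: ler_sum => k _; apply: le_trans (ler_norm_sum _ _ _) _.
  apply: ler_sum => i _; rewrite /fib; case: eqP => _ //; by rewrite normr0.
move: h1; rewrite big_split /= sum_const_fset; lra.
Qed.

End RealSums5.

Local Open Scope complex_scope.
Section ComplexSums.
Variable R : realType.
Local Notation C := R[i].
Local Notation Re := (@complex.Re R).
Local Notation Im := (@complex.Im R).

Definition hsC {I : choiceType} (u : I -> C) (l : C) :=
  has_sum (fun i => Re (u i)) (Re l) /\ has_sum (fun i => Im (u i)) (Im l).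
Definition absC {I : choiceType} (u : I -> C) :=
  abssum (fun i => Re (u i)) /\ abssum (fun i => Im (u i)).

Lemma ReM (x y : C) : Re (x * y) = Re x * Re y - Im x * Im y.
Proof. by case: x y => [a b] [c d]. Qed.
Lemma ImM (x y : C) : Im (x * y) = Re x * Im y + Im x * Re y.
Proof. by case: x y => [a b] [c d]. Qed.
Lemma ReD (x y : C) : Re (x + y) = Re x + Re y.
Proof. by case: x y => [a b] [c d]. Qed.
Lemma ImD (x y : C) : Im (x + y) = Im x + Im y.
Proof. by case: x y => [a b] [c d]. Qed.
Lemma ceq (x y : C) : Re x = Re y -> Im x = Im y -> x = y.
Proof. by case: x y => [a b] [c d] /= -> ->. Qed.
Lemma Re_sum {I : Type} (s : seq I) (F : I -> C) :
  Re (\sum_(i <- s) F i) = \sum_(i <- s) Re (F i).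
Proof.
elim: s => [|x s IH]; first by rewrite !big_nil.
by rewrite !big_cons ReD IH.
Qed.
Lemma Im_sum {I : Type} (s : seq I) (F : I -> C) :
  Im (\sum_(i <- s) F i) = \sum_(i <- s) Im (F i).
Proof.
elim: s => [|x s IH]; first by rewrite !big_nil.
by rewrite !big_cons ImD IH.
Qed.

Lemma hsC_unique {I : choiceType} (u : I -> C) l1 l2 : hsC u l1 -> hsC u l2 -> l1 = l2.
Proof.
move=> [h1 h1'] [h2 h2']; apply: ceq; [exact: has_sum_unique h1 h2 | exact: has_sum_unique h1' h2'].
Qed.

Lemma hsC_exists {I : choiceType} (u : I -> C) : absC u -> exists l, hsC u l.
Proof.
move=> [/abssum_has_sum [a ha] /abssum_has_sum [b hb]]; by exists (a +i* b).
Qed.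

Lemma hsC_ext {I : choiceType} (u v : I -> C) l :
  (forall i, u i = v i) -> hsC u l -> hsC v l.
Proof. by move=> uv; rewrite (boolp.funext uv). Qed.

Lemma absC_ext {I : choiceType} (u v : I -> C) :
  (forall i, u i = v i) -> absC u -> absC v.
Proof. by move=> uv; rewrite (boolp.funext uv). Qed.

Lemma hsC_scale {I : choiceType} (u : I -> C) l c :
  hsC u l -> hsC (fun i => c * u i) (c * l).
Proof.
move=> [hr hi]; split.
  rewrite ReM; apply: has_sum_ext (has_sumB (has_sumZ (Re c) hr) (has_sumZ (Im c) hi)) => i.
  by rewrite ReM.
by rewrite ImM; apply: has_sum_ext (has_sumD (has_sumZ (Re c) hi) (has_sumZ (Im c) hr)) => i;
  rewrite ImM.
Qed.

Lemma absC_scale {I : choiceType} (u : I -> C) c : absC u -> absC (fun i => c * u i).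
Proof.
move=> [hr hi]; split.
  apply: abssum_le (abssumB (abssumZ (Re c) hr) (abssumZ (Im c) hi)) => i.
  by rewrite ReM.
apply: abssum_le (abssumD (abssumZ (Re c) hi) (abssumZ (Im c) hr)) => i.
by rewrite ImM.
Qed.


Lemma hsC_prod {I J : choiceType} (u : I -> C) (v : J -> C) U V :
  hsC u U -> absC u -> hsC v V -> absC v ->
  hsC (fun p : I * J => u p.1 * v p.2) (U * V).
Proof.
move=> [hr hi] [ar ai] [hr' hi'] [ar' ai']; split.
  rewrite ReM; apply: has_sum_ext (has_sumB (has_sum_prod hr ar hr' ar') (has_sum_prod hi ai hi' ai')) => p.
  by rewrite ReM.
rewrite ImM; apply: has_sum_ext (has_sumD (has_sum_prod hr ar hi' ai') (has_sum_prod hi ai hr' ar')) => p.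
by rewrite ImM.
Qed.

Lemma absC_prod {I J : choiceType} (u : I -> C) (v : J -> C) :
  absC u -> absC v -> absC (fun p : I * J => u p.1 * v p.2).
Proof.
move=> [ar ai] [ar' ai']; split.
  apply: abssum_le (abssumB (abssum_prod ar ar') (abssum_prod ai ai')) => p.
  by rewrite ReM.
apply: abssum_le (abssumD (abssum_prod ar ai') (abssum_prod ai ar')) => p.
by rewrite ImM.
Qed.

Definition fibC {I K : choiceType} (g : I -> K) (u : I -> C) (k : K) :=
  fun i => if g i == k then u i else 0.

Lemma Re_fibC {I K : choiceType} (g : I -> K) (u : I -> C) k i :
  Re (fibC g u k i) = fib g (fun i => Re (u i)) k i.
Proof. by rewrite /fibC /fib; case: (g i == k). Qed.
Lemma Im_fibC {I K : choiceType} (g : I -> K) (u : I -> C) k i :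
  Im (fibC g u k i) = fib g (fun i => Im (u i)) k i.
Proof. by rewrite /fibC /fib; case: (g i == k). Qed.

Lemma hsC_regroup {I K : choiceType} (u : I -> C) (g : I -> K) (s : K -> C) L :
  hsC u L -> (forall k, hsC (fibC g u k) (s k)) -> hsC (fun k => s k) L.
Proof.
move=> [hr hi] hs; split.
  apply: (has_sum_regroup (g := g) hr) => k; have [h _] := hs k.
  by apply: has_sum_ext h => i; rewrite Re_fibC.
apply: (has_sum_regroup (g := g) hi) => k; have [_ h] := hs k.
by apply: has_sum_ext h => i; rewrite Im_fibC.
Qed.

Lemma absC_regroup {I K : choiceType} (u : I -> C) (g : I -> K) (s : K -> C) :
  absC u -> (forall k, hsC (fibC g u k) (s k)) -> absC (fun k => s k).
Proof.
move=> [hr hi] hs; split.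
  apply: (abssum_regroup (g := g) hr) => k; have [h _] := hs k.
  by apply: has_sum_ext h => i; rewrite Re_fibC.
apply: (abssum_regroup (g := g) hi) => k; have [_ h] := hs k.
by apply: has_sum_ext h => i; rewrite Im_fibC.
Qed.

Lemma hsC_reindex {I J : choiceType} (h : J -> I) (u : I -> C) l :
  injective h -> (forall i, (forall j, h j <> i) -> u i = 0) ->
  hsC u l <-> hsC (fun j => u (h j)) l.
Proof.
move=> hinj hz; rewrite /hsC.
rewrite (@has_sum_reindex _ _ _ h (fun i => Re (u i)) (Re l) hinj); last by move=> i /hz ->.
by rewrite (@has_sum_reindex _ _ _ h (fun i => Im (u i)) (Im l) hinj) //; move=> i /hz ->.
Qed.

Lemma absC_reindex {I J : choiceType} (h : J -> I) (u : I -> C) :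
  injective h -> absC u -> absC (fun j => u (h j)).
Proof.
by move=> hinj [hr hi]; split; [exact: (@abssum_reindex _ _ _ h _ hinj hr) | exact: (@abssum_reindex _ _ _ h _ hinj hi)].
Qed.

Lemma hsC_finite {I : choiceType} (u : I -> C) (A : {fset I}) :
  (forall i, i \notin A -> u i = 0) -> hsC u (\sum_(i <- A) u i).
Proof.
move=> hA; rewrite /hsC Re_sum Im_sum; split; apply: has_sum_finite => i /hA ->//.
Qed.

Lemma hsC_real {I : choiceType} (f : I -> R) l (W : C) :
  has_sum f l -> hsC (fun i => (f i)%:C * W) (l%:C * W).
Proof.
move=> hf.
have h0 : hsC (fun i => (f i)%:C) l%:C by split => //; exact: has_sum0.
have := hsC_scale W h0; rewrite mulrC; apply: hsC_ext => i; exact: mulrC.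
Qed.

End ComplexSums.

Local Open Scope complex_scope.
Section Trig.
Variable R : realType.
Local Notation C := R[i].
Local Notation Re := (@complex.Re R).
Local Notation Im := (@complex.Im R).

Definition cis (t : R) : C := cos t +i* sin t.

Lemma cisD a b : cis (a + b) = cis a * cis b.
Proof. by apply: ceq; rewrite ?ReM ?ImM /= ?sinD ?cosD //; ring. Qed.

Lemma cis0 : cis 0 = 1.
Proof. by apply: ceq; rewrite /= ?cos0 ?sin0. Qed.

Lemma cisX t p : cis t ^+ p = cis (p%:R * t).
Proof.
elim: p => [|p IH]; first by rewrite expr0 mul0r cis0.
by rewrite exprS IH -cisD; congr cis; rewrite -addn1 natrD mulrDl mul1r addrC.
Qed.

Lemma rcM (a b : R) : (a * b)%:C = a%:C * b%:C :> C.
Proof. by apply: ceq; rewrite ?ReM ?ImM /=; ring. Qed.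

Lemma rcD (a b : R) : (a + b)%:C = a%:C + b%:C :> C.
Proof. by apply: ceq; rewrite ?ReD ?ImD /=; ring. Qed.

Lemma rcX (a : R) p : (a ^+ p)%:C = a%:C ^+ p :> C.
Proof.
elim: p => [|p IH]; first by rewrite !expr0.
by rewrite !exprS rcM IH.
Qed.

Lemma Re_rcM (a : R) (w : C) : Re (a%:C * w) = a * Re w.
Proof. by rewrite ReM /= mul0r subr0. Qed.
Lemma Im_rcM (a : R) (w : C) : Im (a%:C * w) = a * Im w.
Proof. by rewrite ImM /= mul0r addr0. Qed.

Definition eC (q : C) (p : nat) : C := ((p`!%:R)^-1)%:C * q ^+ p.

Lemma eC_cis (a t : R) p :
  eC (a%:C * cis t) p = ((p`!%:R)^-1 * a ^+ p)%:C * cis (p%:R * t).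
Proof. by rewrite /eC exprMn -rcX cisX rcM mulrA. Qed.

Lemma sum_iota_le (u : nat -> R) (A : {fset nat}) :
  (forall k, 0 <= u k) ->
  exists N, \sum_(k <- A) u k <= \sum_(0 <= k < N) u k.
Proof.
move=> u0; exists (\max_(k <- A) k).+1.
have sA : (A `<=` seq_fset tt (iota 0 (\max_(k <- A) k).+1))%fset.
  apply/fsubsetP => k kA; rewrite seq_fsetE mem_iota add0n /= ltnS.
  exact: (leq_bigmax_seq (F := id)).
apply: (le_trans (sum_fset_le sA (fun k _ => u0 k))).
rewrite (@sum_fset_perm _ _ _ (iota 0 (\max_(k <- A) k).+1)) ?iota_uniq //; last by move=> k; rewrite seq_fsetE.
Qed.

Lemma abssum_expc (r : R) : abssum (fun p : nat => (p`!%:R)^-1 * r ^+ p).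
Proof.
exists (expR `|r|) => A.
have [N HN] := sum_iota_le A (fun k => normr_ge0 ((k`!%:R)^-1 * r ^+ k)).
apply: le_trans HN _.
have -> : \sum_(0 <= k < N) `|(k`!%:R)^-1 * r ^+ k| = series (exp_coeff `|r|) N.
  rewrite /series /=; apply: eq_bigr => k _.
  by rewrite /exp_coeff /= normrM normfV normrX normr_nat mulrC.
apply: nondecreasing_cvgn_le; last exact: is_cvg_series_exp_coeff.
by apply: nondecreasing_series => n _ _; apply: exp_coeff_ge0.
Qed.

Lemma absC_eC (a t : R) : absC (eC (a%:C * cis t)).
Proof.
split.
  apply: abssum_le (abssum_expc a) => p; rewrite eC_cis Re_rcM normrM /=.
  by apply: ler_piMr => //; exact: cos_max.
apply: abssum_le (abssum_expc a) => p; rewrite eC_cis Im_rcM normrM /=.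
by apply: ler_piMr => //; exact: sin_max.
Qed.

End Trig.

Local Open Scope complex_scope.
Section JA1.
Variable R : realType.
Local Notation C := R[i].
Local Notation Re := (@complex.Re R).
Local Notation Im := (@complex.Im R).

Lemma half_pred_odd m : odd m -> m.-1./2 = m./2.
Proof. by case: m => //= m /negbTE om; rewrite uphalf_half om. Qed.

Lemma Re_mk (a b : R) : Re (a +i* b) = a. Proof. by []. Qed.
Lemma Im_mk (a b : R) : Im (a +i* b) = b. Proof. by []. Qed.

Lemma mulcE (a b c d : R) : (a +i* b) * (c +i* d) = (a*c - b*d) +i* (a*d + b*c).
Proof. by []. Qed.

Lemma iX (t : R) m : (0 +i* t) ^+ m =
  ((~~ odd m)%:R * (-1) ^+ m./2 * t ^+ m) +i* ((odd m)%:R * (-1) ^+ m.-1./2 * t ^+ m) :> C.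
Proof.
elim: m => [|m IH].
  by rewrite expr0; apply: ceq => /=; rewrite ?expr0 ?mulr1 ?mul0r.
rewrite exprS IH mulcE; congr (_ +i* _).
  have e1 : (~~ odd m.+1) = odd m by rewrite /= negbK.
  have e2 : m.+1./2 = (odd m + m./2)%N by rewrite /= uphalf_half.
  rewrite e1 e2; case: (boolP (odd m)) => om.
    rewrite half_pred_odd // exprS exprD expr1 /=; ring.
  rewrite /=; ring.
have e1 : (odd m.+1) = ~~ odd m by [].
have e2 : m.+1.-1./2 = m./2 by [].
rewrite e1 e2 exprS; ring.
Qed.
Lemma mulrn_rc (w : C) n : w *+ n = ((n%:R : R)%:C * w) :> C.
Proof.
elim: n => [|n IH]; first by rewrite mulr0n mul0r.
by rewrite mulrS IH -addn1 natrD rcD mulrDl mul1r addrC.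
Qed.

Lemma Re_eC_i (t : R) m : Re (eC (0 +i* t) m) = cos_coeff t m.
Proof. by rewrite /eC Re_rcM iX Re_mk [LHS]mulrC. Qed.
Lemma Im_eC_i (t : R) m : Im (eC (0 +i* t) m) = sin_coeff t m.
Proof. by rewrite /eC Im_rcM iX Im_mk [LHS]mulrC. Qed.

Lemma hs_exp_i (t : R) (L : C) : hsC (eC (0 +i* t)) L -> L = cis t.
Proof.
move=> [hr hi]; apply: ceq; rewrite ?Re_mk ?Im_mk.
  have h : has_sum (cos_coeff t) (Re L) by apply: has_sum_ext hr => m; exact: Re_eC_i.
  have -> : cos t = lim (series (cos_coeff t) @ \oo)%classic by rewrite unlock.
  apply/esym; exact: (cvg_lim _ (has_sum_cvg h)).
have h : has_sum (sin_coeff t) (Im L) by apply: has_sum_ext hi => m; exact: Im_eC_i.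
have -> : sin t = lim (series (sin_coeff t) @ \oo)%classic by rewrite unlock.
apply/esym; exact: (cvg_lim _ (has_sum_cvg h)).
Qed.

End JA1.

Local Open Scope complex_scope.
Section JA2.
Variable R : realType.
Local Notation C := R[i].
Local Notation Re := (@complex.Re R).
Local Notation Im := (@complex.Im R).
Variables (z th : R).

Definition ha : R := z / 2.
Definition jx : C := ha%:C * cis th.
Definition jy : C := (- ha)%:C * cis (- th).
Definition JF (pq : nat * nat) : C := eC jx pq.1 * eC jy pq.2.
Definition rho (pq : nat * nat) : R :=
  ((pq.1`!%:R)^-1 * ha ^+ pq.1) * ((pq.2`!%:R)^-1 * (- ha) ^+ pq.2).
Definition bterm (m q : nat) : R :=
  (-1) ^+ q / ((q`!)%:R * ((q + m)`!)%:R) * (z / 2) ^+ (2 * q + m).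
Definition g1 (pq : nat * nat) : nat := (pq.1 + pq.2)%N.
Definition g2 (pq : nat * nat) : int := (pq.1%:Z - pq.2%:Z)%R.

Lemma absC_JF : absC JF.
Proof. exact: (absC_prod (absC_eC ha th) (absC_eC (- ha) (- th))). Qed.

Lemma abssum_rho : abssum rho.
Proof. exact: (abssum_prod (abssum_expc ha) (abssum_expc (- ha))). Qed.

Lemma JF_rho pq : JF pq = (rho pq)%:C * cis ((pq.1%:R - pq.2%:R) * th).
Proof.
case: pq => p q; rewrite /JF /jx /jy !eC_cis /rho rcM /=.
have -> : (p%:R - q%:R) * th = p%:R * th + q%:R * (- th) by ring.
rewrite cisD; ring.
Qed.

Lemma jxy : jx + jy = 0 +i* (z * sin th) :> C.
Proof.
apply: ceq; rewrite ?ReD ?ImD /jx /jy ?Re_rcM ?Im_rcM /cis ?Re_mk ?Im_mk ?cosN ?sinN /ha.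
  ring.
by field.
Qed.

Lemma fact_bin m i : (i <= m)%N ->
  (m`!%:R)^-1 * ('C(m, i))%:R = ((m - i)`!%:R)^-1 * (i`!%:R)^-1 :> R.
Proof.
move=> im; have := bin_fact im; move/(congr1 (fun n => n%:R : R)); rewrite !natrM => <-.
have h1 : ('C(m, i))%:R != 0 :> R by rewrite pnatr_eq0 -lt0n bin_gt0.
have h2 : (i`!)%:R != 0 :> R by rewrite pnatr_eq0 -lt0n fact_gt0.
have h3 : ((m - i)`!)%:R != 0 :> R by rewrite pnatr_eq0 -lt0n fact_gt0.
by field; rewrite h1 h2 h3.
Qed.

Lemma fib1 m : hsC (fibC g1 JF m) (eC (jx + jy) m).
Proof.
pose s := [seq (m - j, j)%N | j <- iota 0 m.+1].
pose A := seq_fset tt s.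
have hA : forall pq, pq \notin A -> fibC g1 JF m pq = 0.
  case=> p q; rewrite seq_fsetE /fibC /g1 /=; case: eqP => // hm.
  move=> /negP []; apply/mapP; exists q; first by rewrite mem_iota; lia.
  congr pair; lia.
have := hsC_finite hA; congr hsC.
have us : uniq s by rewrite map_inj_uniq ?iota_uniq // => j1 j2 [].
rewrite (perm_big s); last by apply: uniq_perm; rewrite ?fset_uniq // => pq; rewrite seq_fsetE.
rewrite /s; have -> : iota 0 m.+1 = index_iota 0 m.+1 by rewrite /index_iota subn0.
rewrite big_map big_mkord /eC exprDn mulr_sumr.
apply: eq_bigr => i _.
have im : (i <= m)%N by rewrite -ltnS ltn_ord.
rewrite /fibC /g1 /= subnK // eqxx.
rewrite mulrn_rc /JF /eC /=.
rewrite [RHS]mulrA -rcM fact_bin // rcM; ring.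
Qed.

Lemma rho_pos m q : rho ((q + m)%N, q) = bterm m q.
Proof.
rewrite /rho /bterm /= (exprNn (z / 2)) mul2n -addnn !exprD invfM /ha; ring.
Qed.

Lemma rho_neg m q : rho (q, (q + m.+1)%N) = (-1) ^+ m.+1 * bterm m.+1 q.
Proof.
rewrite /rho /bterm /= (exprNn (z / 2)) mul2n -addnn !exprD invfM /ha; ring.
Qed.

Lemma bessel_hs m : has_sum (bterm m) (besselJnat m z).
Proof.
have hinj : injective (fun q : nat => ((q + m)%N, q)) by move=> a b [_ ->].
have ab : abssum (bterm m).
  have := abssum_reindex hinj abssum_rho; apply: abssum_le => q; by rewrite rho_pos.
have [l hl] := abssum_has_sum ab.
have e : besselJnat m z = l by rewrite /besselJnat; exact: has_sum_limn hl.
by rewrite e.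
Qed.

Lemma fib2 k : has_sum (fib g2 rho k) (besselJ k z).
Proof.
case: k => m.
  have hinj : injective (fun q : nat => ((q + m)%N, q)) by move=> a b [_ ->].
  apply/(has_sum_reindex _ hinj).
    case=> p q hn; rewrite /fib; case: eqP => // e; exfalso; apply: (hn q).
    rewrite /g2 /= in e; congr pair; lia.
  apply: has_sum_ext (bessel_hs m) => q; rewrite /fib ifT ?rho_pos //.
  by apply/eqP; rewrite /g2 /=; lia.
have hinj : injective (fun q : nat => (q, (q + m.+1)%N)) by move=> a b [->].
apply/(has_sum_reindex _ hinj).
  case=> p q hn; rewrite /fib; case: eqP => // e; exfalso; apply: (hn p).
  rewrite /g2 /= in e; congr pair; lia.
apply: has_sum_ext (has_sumZ ((-1) ^+ m.+1) (bessel_hs m.+1)) => q.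
rewrite /fib ifT ?rho_neg //.
by apply/eqP; rewrite /g2 /=; lia.
Qed.

Lemma fibC2 k pq : fibC g2 JF k pq = (fib g2 rho k pq)%:C * cis (k%:~R * th).
Proof.
rewrite /fibC /fib; case: eqP => [e|_]; last by rewrite mul0r.
rewrite JF_rho -e /g2 intrB; by [].
Qed.

Lemma jacobi_anger :
  and (hsC (fun k : int => (besselJ k z)%:C * cis (k%:~R * th)) (cis (z * sin th)))
  (absC (fun k : int => (besselJ k z)%:C * cis (k%:~R * th))).
Proof.
have [L hL] := hsC_exists absC_JF.
have eL : L = cis (z * sin th).
  apply: hs_exp_i; rewrite -jxy.
  exact: (hsC_regroup (g := g1) hL fib1).
have hk : forall k, hsC (fibC g2 JF k) ((besselJ k z)%:C * cis (k%:~R * th)).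
  move=> k; apply: hsC_ext (hsC_real (cis (k%:~R * th)) (fib2 k)) => pq.
  by rewrite fibC2.
split; first by rewrite -eL; exact: (hsC_regroup hL hk).
exact: (absC_regroup absC_JF hk).
Qed.

End JA2.

Local Open Scope complex_scope.
Section NDim.
Variable R : realType.
Local Notation C := R[i].
Local Notation Re := (@complex.Re R).
Local Notation Im := (@complex.Im R).

Definition zsplit (n : nat) (k : zvec n.+1) : int * zvec n :=
  (k ord0, [ffun j => k (lift ord0 j)]).

Definition zjoin (n : nat) (p : int * zvec n) : zvec n.+1 :=
  [ffun j => if unlift ord0 j is Some j' then p.2 j' else p.1].

Lemma zsplitK n : cancel (@zsplit n) (@zjoin n).
Proof.
move=> k; apply/ffunP => j; rewrite ffunE /zsplit /=.
by case: (unliftP ord0 j) => [j'|] ->; rewrite ?ffunE.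
Qed.

Lemma zjoinK n : cancel (@zjoin n) (@zsplit n).
Proof.
case=> a k'; rewrite /zsplit /zjoin ffunE unlift_none; congr pair.
by apply/ffunP => j; rewrite !ffunE liftK.
Qed.

Lemma prodC (n : nat) (u : 'I_n -> int -> C) (U : 'I_n -> C) :
  (forall j, hsC (u j) (U j) /\ absC (u j)) ->
  and (hsC (fun k : zvec n => \prod_(j < n) u j (k j)) (\prod_(j < n) U j))
      (absC (fun k : zvec n => \prod_(j < n) u j (k j))).
Proof.
elim: n u U => [|n IH] u U hu.
  pose k0 : zvec 0 := [ffun j => 0%R].
  have hA : forall k : zvec 0, k \notin [fset k0]%fset -> \prod_(j < 0) u j (k j) = 0.
    move=> k; rewrite inE (_ : k = k0) ?eqxx //; by apply/ffunP => -[].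
  have := hsC_finite hA; rewrite big_seq_fset1 !big_ord0 => h; split => //.
  split; [apply: (abssum_finite (A := [fset k0]%fset)) | apply: (abssum_finite (A := [fset k0]%fset))];
    by move=> k /hA ->.
have [h1 a1] := IH (fun j => u (lift ord0 j)) (fun j => U (lift ord0 j)) (fun j => hu _).
have [h0 a0] := hu ord0.
have hp := hsC_prod h0 a0 h1 a1.
have ap := absC_prod a0 a1.
have hinj : injective (@zsplit n) := can_inj (@zsplitK n).
have hsurj : forall i : int * zvec n, (forall j, @zsplit n j <> i) -> False.
  by move=> i /(_ (zjoin i)); rewrite zjoinK.
split.
  rewrite big_ord_recl; move: hp => /(hsC_reindex _ hinj) hp.
  have {}hp := hp (fun i hi => False_ind _ (hsurj i hi)).
  apply: hsC_ext hp => k; rewrite /zsplit /= big_ord_recl; congr (_ * _).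
  by apply: eq_bigr => j _; rewrite ffunE.
have := absC_reindex hinj ap; apply: absC_ext => k.
rewrite /zsplit /= big_ord_recl; congr (_ * _).
by apply: eq_bigr => j _; rewrite ffunE.
Qed.

End NDim.

Local Open Scope complex_scope.
Section Final.
Variable R : realType.
Local Notation C := R[i].
Local Notation Re := (@complex.Re R).
Local Notation Im := (@complex.Im R).

Lemma prod_rc_cis {I : Type} (s : seq I) (f g : I -> R) :
  \prod_(j <- s) ((f j)%:C * cis (g j)) = (\prod_(j <- s) f j)%:C * cis (\sum_(j <- s) g j).
Proof.
elim: s => [|j s IH]; first by rewrite !big_nil cis0 mulr1.
by rewrite !big_cons IH cisD rcM; ring.
Qed.

Lemma prod_cis {I : Type} (s : seq I) (g : I -> R) :
  \prod_(j <- s) cis (g j) = cis (\sum_(j <- s) g j).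
Proof.
elim: s => [|j s IH]; first by rewrite !big_nil cis0.
by rewrite !big_cons IH cisD.
Qed.

Lemma row_hs (n : nat) (a : 'I_n -> R) (th : 'I_n -> R) (b : R) :
  has_sum (fun k : zvec n => alpha k a * sin (b + zdot k th))
    (sin (b + \sum_(j < n) a j * sin (th j))).
Proof.
have [h _] := prodC (fun j => jacobi_anger (a j) (th j)).
rewrite prod_cis in h.
have [_ h'] := hsC_scale (cis b) h.
rewrite -cisD in h'.
apply: has_sum_ext h' => k.
rewrite prod_rc_cis mulrCA -cisD Im_rcM.
by [].
Qed.

Lemma zdot_lin (n : nat) (k : zvec n) (w p : 'I_n -> R) (x : R) :
  zdot k (fun j => w j * x + p j) = zdot k w * x + zdot k p.
Proof.
rewrite /zdot mulr_suml -big_split /=; apply: eq_bigr => j _; ring.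
Qed.

End Final.
Local Close Scope complex_scope.
Unset Implicit Arguments.

Theorem theorem4 (R : realType) (n : nat) (hn : (1 <= n)%N)
  (omega phi : 'I_n -> R) (a : 'M[R]_n) (b c : 'I_n -> R) (d : R) :
  let A (k : zvec n) (i : 'I_n) : R :=
    alpha k (fun j => a i j) * sin (zdot k phi + b i) in
  let B (k : zvec n) (i : 'I_n) : R :=
    alpha k (fun j => a i j) * cos (zdot k phi + b i) in
  forall x : R,
  exists l : R,
    has_sum (fun k : zvec n =>
        (\sum_(i < n) c i * A k i) * cos (zdot k omega * x)
      + (\sum_(i < n) c i * B k i) * sin (zdot k omega * x)) l
    /\ sinnet omega phi a b c d x = l + d.
Proof.
move=> A B x.
pose th j := omega j * x + phi j.
have hrow : forall i : 'I_n, has_sum (fun k : zvec n => c i * (alpha k (fun j => a i j) * sin (b i + zdot k th)))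
    (c i * sin (b i + \sum_(j < n) a i j * sin (th j))).
  move=> i; apply: has_sumZ; exact: row_hs.
have hall := has_sum_big (index_enum 'I_n) hrow.
exists (\sum_(i < n) c i * sin (b i + \sum_(j < n) a i j * sin (th j))); split.
  apply: has_sum_ext hall => k.
  rewrite /th zdot_lin /A /B.
  set W := zdot k omega * x; set P := zdot k phi.
  rewrite !mulr_suml -big_split /=; apply: eq_bigr => i _.
  rewrite (addrC (b i)) -addrA [in LHS]sinD; ring.
rewrite /sinnet; congr (_ + d); apply: eq_bigr => i _.
by rewrite addrC.
Qed.
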